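(* Let $T$ be a finite tree with vertex set $\{u_1,\dots,u_n\}$, and let \[\cdots\to R^c(-4)\oplus R^b(-3)\to R^q(-2)\to R\to R/I(L(T))\to 0\] be the minimal graded free resolution of $R/I(L(T))$ (so $b=\beta_{2,3}(R/I(L(T)))$). Then \[b=\sum_{\{u_i,u_j\}\in E(T)}\binom{\deg u_i+\deg u_j-2}{2}-\sum_{i=1}^n\binom{\deg u_i}{3}.\]
   Context: Degrees are taken in $T$. The line graph $L(T)$ has vertex set $E(T)$, two vertices adjacent iff the corresponding edges share a vertex. $R=\Bbbk[e_{uv}:\{u,v\}\in E(T)]$ for a field $\Bbbk$, and $I(L(T))=\langle e_fe_g: f\neq g\in E(T),\ f\cap g\neq\emptyset\rangle$ is the edge ideal of $L(T)$. *)

(* Defs.v *)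
From HB Require Import structures.
From mathcomp Require Import all_boot all_algebra.
From mathcomp Require Import mpoly.

Set Implicit Arguments.
Unset Strict Implicit.
Unset Printing Implicit Defensive.

Import GRing.Theory.
Local Open Scope ring_scope.

Section Graph.
Variables (V : finType) (e : rel V).

Definition simple_graph : Prop := ssrbool.symmetric e /\ irreflexive e.

Definition graph_edges : {set {set V}} :=
  [set s : {set V} | [exists x, exists y, e x y && (s == [set x; y])]].

Definition graph_connected : Prop := forall x y : V, connect e x y.

Definition graph_acyclic : Prop :=
  forall p : seq V, uniq p -> (3 <= size p)%N -> ~~ cycle e p.

Definition is_tree : Prop :=
  simple_graph /\ (0 < #|V|)%N /\ graph_connected /\ graph_acyclic.

Definition vdeg (x : V) : nat := #|[set y | e x y]|.

(* number of edges; the variables of R are indexed by 'I_nedges *)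
Definition nedges : nat := #|graph_edges|.

Definition edge_of (i : 'I_nedges) : {set V} := @enum_val _ (mem graph_edges) i.

Definition line_adj (i j : 'I_nedges) : bool :=
  (i != j) && (edge_of i :&: edge_of j != set0).

(* the minimal monomial generators e_f e_g of I(L(T)), each unordered pair once *)
Definition line_gens : {set 'I_nedges * 'I_nedges} :=
  [set p : 'I_nedges * 'I_nedges | ((p.1 < p.2)%N && line_adj p.1 p.2)].

Definition ngens : nat := #|line_gens|.

Section Ring.
Variable K : fieldType.

Definition gen_mon (k : 'I_ngens) : {mpoly K[nedges]} :=
  let p := @enum_val _ (mem line_gens) k in 'X_p.1 * 'X_p.2.

(* F_1 = R(-2)^q --> R ; an element of (F_1)_3 is a q-tuple of linear forms,
   encoded by its coefficient matrix c (row k = linear form of generator k) *)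
Definition syz_image (c : 'M[K]_(ngens, nedges)) : {mpoly K[nedges]} :=
  \sum_(k < ngens) ((\sum_(f < nedges) c k f *: 'X_f) * gen_mon k).

(* coefficients of the image on all monomials of total degree < 4 (the image
   is homogeneous of degree 3, so it vanishes iff these all vanish) *)
Definition syz_coords (c : 'M[K]_(ngens, nedges)) : 'rV[K]_(#|{: 'X_{1..nedges < 4}}|) :=
  \row_(j < #|{: 'X_{1..nedges < 4}}|)
     (syz_image c)@_(bmnm (@enum_val _ (mem {: 'X_{1..nedges < 4}}) j)).

Definition syz3 : {vspace 'M[K]_(ngens, nedges)} := lker (linfun syz_coords).

(* beta_{2,3}(R/I(L(T))) = dim_K (ker(F_1 -> R))_3 *)
Definition beta23_line : nat := \dim syz3.

End Ring.
End Graph.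

(* Main.v *)
Require Import Defs.
From HB Require Import structures.
From mathcomp Require Import all_boot all_algebra.
From mathcomp Require Import mpoly.
From mathcomp Require Import zify.
Set Implicit Arguments.
Unset Strict Implicit.
Unset Printing Implicit Defensive.

Lemma card_setI_sum (T : finType) (A : {set T}) (P : pred T) :
  #|[set x in A | P x]| = \sum_(x in A) P x.
Proof.
rewrite -sum1_card big_mkcond [RHS]big_mkcond /=; apply: eq_bigr => x _.
by rewrite !inE; case: (x \in A); case: (P x).
Qed.

Lemma card_imset_equiv (T Y Z : finType) (D : {set T}) (f : T -> Y) (g : T -> Z) :
  {in D &, forall x y, (f x == f y) = (g x == g y)} -> #|f @: D| = #|g @: D|.
Proof.
move=> fg.
pose h (y : Y) : option Z := if [pick x in D | f x == y] is Some x then Some (g x) else None.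
have hf : {in D, forall x, h (f x) = Some (g x)}.
  move=> x xD; rewrite /h; case: pickP => [x' /andP [x'D /eqP e]|/(_ x)].
    by congr Some; apply/eqP; rewrite -fg // e.
  by rewrite xD eqxx.
have sinj : injective (@Some Z) by move=> a b [].
rewrite -(card_imset (g @: D) sinj).
have -> : Some @: (g @: D) = h @: (f @: D).
  apply/setP => z; apply/imsetP/imsetP => [[z' /imsetP [x xD ->] ->]|[y /imsetP [x xD ->] ->]].
    by exists (f x); [apply: imset_f | rewrite hf].
  by exists (g x); [apply: imset_f | rewrite hf].
rewrite [RHS]card_in_imset // => y1 y2 /imsetP [x1 x1D ->] /imsetP [x2 x2D ->].
by rewrite !hf // => -[] /eqP; rewrite -fg // => /eqP ->.
Qed.

Lemma in_set_seq (T : finType) (s : seq T) x : (x \in [set u | u \in s]) = (x \in s).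
Proof. by rewrite inE. Qed.

Lemma sum_set_seq (T : finType) (s : seq T) (F : T -> nat) : uniq s ->
  \sum_(x in [set u | u \in s]) F x = \sum_(x <- s) F x.
Proof.
move=> us; rewrite big_uniq //; apply: eq_bigl => x; by rewrite inE.
Qed.

Section Comb.
Variables (m q : nat) (adj : rel 'I_m).
Hypothesis adjC : ssrbool.symmetric adj.
Hypothesis adjI : irreflexive adj.
Variable pr : 'I_q -> 'I_m * 'I_m.
Hypothesis pr_inj : injective pr.
Hypothesis pr_lt : forall k, (pr k).1 < (pr k).2.
Hypothesis pr_adj : forall k, adj (pr k).1 (pr k).2.
Hypothesis pr_surj : forall a b : 'I_m, a < b -> adj a b -> exists k, pr k = (a, b).

Definition gs k : {set 'I_m} := [set (pr k).1; (pr k).2].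
Definition D3 : {set {set 'I_m}} := [set S : {set 'I_m} | #|S| == 3].
Definition eS (S : {set 'I_m}) := #|[set k | gs k \subset S]|.
Definition Nb a : {set 'I_m} := [set x | adj a x].
Definition cS (S : {set 'I_m}) := #|[set a in S | S :\ a \subset Nb a]|.
Definition tS (S : {set 'I_m}) : bool := [forall u in S, forall v in S, (u != v) ==> adj u v].

Lemma eS_sum (S : {set 'I_m}) : eS S = \sum_(u in S) \sum_(v in S) ((u < v) && adj u v).
Proof.
rewrite /eS -(card_imset _ pr_inj).
have -> : pr @: [set k | gs k \subset S] =
   [set uv | (uv.1 \in S) && ((uv.2 \in S) && ((uv.1 < uv.2) && adj uv.1 uv.2))].
  apply/setP => [[u v]]; rewrite !inE /=; apply/imsetP/idP.
    move=> [k]; rewrite inE => sk huv; move: sk (pr_lt k) (pr_adj k).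
    by rewrite /gs -huv /= subUset !sub1set => /andP [-> ->] -> ->.
  case/and4P => uS vS uv auv; have [k hk] := pr_surj uv auv.
  exists k => //; rewrite inE /gs hk /= subUset !sub1set uS vS. done.
rewrite -sum1_card.
have -> : \sum_(u in S) \sum_(v in S) ((u < v) && adj u v) =
          \sum_(u in S) \sum_(v | (v \in S) && ((u < v) && adj u v)) 1.
  apply: eq_bigr => u _; rewrite big_mkcondr /=; apply: eq_bigr => v _.
  by case: (_ && _).
rewrite pair_big_dep /=; apply: eq_bigl => -[u v]; by rewrite inE.
Qed.

Lemma subD1_all (s : seq 'I_m) a :
  ([set u | u \in s] :\ a \subset Nb a) = all (fun u => (u != a) ==> adj a u) s.
Proof.
apply/subsetP/allP => [h u us|h u]; first by apply/implyP => ua; have := h u; rewrite !inE ua us => /(_ isT).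
by rewrite !inE => /andP [ua us]; have := h u us; rewrite ua.
Qed.

Lemma tS_all (s : seq 'I_m) :
  tS [set u | u \in s] = all (fun u => all (fun v => (u != v) ==> adj u v) s) s.
Proof.
apply/forall_inP/allP => [h u us|h u].
  apply/allP => v vs; have /forall_inP hv : [forall (v | v \in [set u | u \in s]), (u != v) ==> adj u v] by apply: h; rewrite inE.
  by apply: hv; rewrite inE.
rewrite inE => us; apply/forall_inP => v; rewrite inE => vs.
by have /allP := h u us; apply.
Qed.

Lemma pointwise S : S \in D3 -> eS S + tS S = cS S + (0 < eS S).
Proof.
rewrite inE; case: cards_eqP => s us.
case: s us => [|x [|y [|z [|]]]] //= us _.
rewrite /cS card_setI_sum eS_sum tS_all.
under eq_bigr => u _ do rewrite sum_set_seq //.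
rewrite !sum_set_seq //.
rewrite !big_cons !big_nil /= !subD1_all /=.
move: us; rewrite !inE !negb_or => /and3P [/andP [xy xz] yz _].
rewrite ![adj y x]adjC ![adj z x]adjC ![adj z y]adjC !adjI !eqxx.
rewrite ![y == x]eq_sym ![z == x]eq_sym ![z == y]eq_sym (negbTE xy) (negbTE xz) (negbTE yz) /=.
have o1 : (x < y) + (y < x) = 1 by case: (ltngtP x y) => // /val_inj e; rewrite e eqxx in xy.
have o2 : (x < z) + (z < x) = 1 by case: (ltngtP x z) => // /val_inj e; rewrite e eqxx in xz.
have o3 : (y < z) + (z < y) = 1 by case: (ltngtP y z) => // /val_inj e; rewrite e eqxx in yz.
case: (adj x y); case: (adj x z); case: (adj y z); rewrite /= ?andbT ?andbF.
all: lia.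
Qed.

Lemma Nb_irr a : a \notin Nb a.
Proof. by rewrite inE adjI. Qed.

Lemma fiber_a a :
  #|[set T : {set 'I_m} | T \subset Nb a & #|T| == 2]| =
  #|[set S in D3 | (a \in S) && (S :\ a \subset Nb a)]|.
Proof.
have aT (T : {set 'I_m}) : T \subset Nb a -> a \notin T.
  by move=> /subsetP h; apply/negP => /h; rewrite (negbTE (Nb_irr a)).
rewrite -(@card_in_imset _ _ (fun T => a |: T)); last first.
  move=> T1 T2; rewrite !inE => /andP [h1 _] /andP [h2 _] e.
  by rewrite -(setU1K (aT _ h1)) e setU1K // aT.
apply: eq_card => S; apply/imsetP/idP.
  move=> [T]; rewrite inE => /andP [hT cT] ->.
  rewrite !inE cardsU1 aT // (eqP cT) setU1K ?aT // eqxx hT. done.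
rewrite !inE => /andP [c3 /andP [aS sub]].
exists (S :\ a); last by rewrite setD1K.
have := cardsD1 a S; rewrite aS (eqP c3) => h.
by rewrite inE sub -(eqn_add2l 1) -h.
Qed.

Lemma sum_C2 : \sum_a 'C(#|Nb a|, 2) = \sum_(S in D3) cS S.
Proof.
under eq_bigr => a _ do rewrite -cards_draws fiber_a card_setI_sum.
rewrite exchange_big /=; apply: eq_bigr => S S3.
rewrite /cS card_setI_sum [RHS]big_mkcond /=; apply: eq_bigr => a _.
by case: (a \in S).
Qed.

Lemma tri_sum : #|[set S in D3 | tS S]| = \sum_(S in D3) tS S.
Proof. exact: card_setI_sum. Qed.

Definition cnt (p : 'I_q * 'I_m) i : nat :=
  (p.2 == i) + (((pr p.1).1 == i) + ((pr p.1).2 == i)).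
Definition Aset : {set 'I_q * 'I_m} := [set p | p.2 \in gs p.1].
Definition Bset : {set 'I_q * 'I_m} := ~: Aset.
Definition phi (p : 'I_q * 'I_m) : {set 'I_m} := p.2 |: gs p.1.

Lemma pr_neq k : (pr k).1 != (pr k).2.
Proof. by apply/eqP => e; have := pr_lt k; rewrite e ltnn. Qed.

Lemma gs_card k : #|gs k| = 2.
Proof. by rewrite /gs cards2 pr_neq. Qed.

Lemma gs_inj : injective gs.
Proof.
move=> k k' e; apply: pr_inj.
have h1 : (pr k).1 \in gs k' by rewrite -e !inE eqxx.
have h2 : (pr k).2 \in gs k' by rewrite -e !inE eqxx orbT.
have h3 : (pr k').1 \in gs k by rewrite e !inE eqxx.
move: h1 h2 h3 (pr_lt k) (pr_lt k'); rewrite !inE.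
case: (pr k) => a b; case: (pr k') => a' b' /=.
case/orP => /eqP -> ; case/orP => /eqP ->; case/orP => /eqP h; try lia.
all: try by [].
all: try (by rewrite h).
Qed.

Lemma cntB p i : p \in Bset -> cnt p i = (i \in phi p).
Proof.
case: p => k f; rewrite /Bset /Aset !inE /cnt /phi /gs /= ?inE negb_or => /andP [fa fb].
have ab := pr_neq k; move: fa fb ab.
case: (pr k) => a b /= fa fb ab.
rewrite ![i == _]eq_sym.
case: eqP => [<-|_]; first by rewrite ![_ == f]eq_sym (negbTE fa) (negbTE fb).
case: eqP => [<-|_]; first by rewrite eq_sym (negbTE ab).
by case: eqP.
Qed.

Lemma cntA_f p : p \in Aset -> cnt p p.2 = 2.
Proof.
case: p => k f; rewrite /Aset !inE /cnt /gs /= ?inE eqxx.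
have ab := pr_neq k; move: ab; case: (pr k) => a b /= ab.
case/orP => /eqP ->; rewrite eqxx ?(negbTE ab) //.
by rewrite eq_sym (negbTE ab).
Qed.

Lemma cntA_2 p i : p \in Aset -> cnt p i = 2 -> i = p.2.
Proof.
case: p => k f; rewrite /Aset !inE /cnt /gs /= ?inE.
have ab := pr_neq k; move: ab; case: (pr k) => a b /= ab.
case/orP => /eqP ->.
  by case: eqP => [->|_] //; case: eqP.
by case: eqP => [->|_] //; case: eqP.
Qed.

Lemma cntA_pos p i : p \in Aset -> (0 < cnt p i) = (i \in gs p.1).
Proof.
case: p => k f; rewrite /Aset !inE /cnt /gs /= ?inE.
case: (pr k) => a b /=.
case/orP => /eqP ->; rewrite ![_ == i]eq_sym; by case: (i == a); case: (i == b).
Qed.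

Lemma cntB_le p i : p \in Bset -> cnt p i <= 1.
Proof. by move=> pB; rewrite cntB //; case: (_ \in _). Qed.

Lemma cnt_injA : {in Aset &, forall p p', (forall i, cnt p i = cnt p' i) -> p = p'}.
Proof.
move=> [k f] [k' f'] pA p'A h.
have ef : f = f'.
  by apply: (cntA_2 p'A); rewrite -h (cntA_f pA).
have ek : k = k'.
  apply: gs_inj; apply/setP => i.
  by rewrite -(cntA_pos i pA) -(cntA_pos i p'A) h.
by rewrite ef ek.
Qed.

Lemma AB_disj p p' : p \in Aset -> p' \in Bset -> exists i, cnt p i != cnt p' i.
Proof.
move=> pA pB; exists p.2; rewrite (cntA_f pA).
by have := cntB_le p.2 pB; case: (cnt p' p.2) => [|[]].
Qed.

Lemma cnt_eqB : {in Bset &, forall p p', (forall i, cnt p i = cnt p' i) <-> phi p = phi p'}.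
Proof.
move=> p p' pB p'B; split => [h|h i]; last by rewrite !cntB // h.
apply/setP => i; have := h i; rewrite !cntB //.
by case: (i \in phi p); case: (i \in phi p').
Qed.

Lemma phi_D3 p : p \in Bset -> phi p \in D3.
Proof.
move=> pB; rewrite inE /phi cardsU1 gs_card.
by move: pB; rewrite !inE => ->.
Qed.

Lemma fiber_card S : S \in D3 -> #|[set p in Bset | phi p == S]| = eS S.
Proof.
move=> S3; rewrite /eS -(@card_in_imset _ _ fst).
  apply: eq_card => k; apply/imsetP/idP.
    move=> [[k0 f]]; rewrite !inE => /andP [pB /eqP <-] -> /=.
    by rewrite /phi subsetU1.
  rewrite inE => sub.
  have : 0 < #|S :\: gs k|.
    by rewrite cardsD (setIidPr sub) gs_card (eqP (_ : #|S| == 3)) //; rewrite inE in S3.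
  case/card_gt0P => f; rewrite inE => /andP [fg fS].
  exists (k, f) => //; rewrite inE; apply/andP; split; first by rewrite /Bset /Aset in_setC in_set /=.
  rewrite /phi eqEcard subUset sub1set fS sub cardsU1 fg gs_card.
  by rewrite inE in S3; rewrite (eqP S3).
move=> [k f] [k' f']; rewrite !in_set /= => /andP [nf /eqP e1] /andP [nf' /eqP e2] ek.
rewrite /= in ek; subst k'; congr pair.
move: nf nf'; rewrite -!in_setU => nf nf'.
have : #|S :\: gs k| == 1.
  rewrite cardsD (setIidPr _); last by rewrite -e1 /phi subsetU1.
  by rewrite gs_card; rewrite inE in S3; rewrite (eqP S3).
case/cards1P => x hx.
have : f \in S :\: gs k by rewrite in_setD nf -e1 /phi setU11.
have : f' \in S :\: gs k by rewrite in_setD nf' -e2 /phi setU11.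
by rewrite hx !inE => /eqP -> /eqP ->.
Qed.

Lemma cardB : #|Bset| = \sum_(S in D3) eS S.
Proof.
rewrite -sum1_card (partition_big phi (mem D3)) /=; last exact: phi_D3.
apply: eq_bigr => S S3; rewrite -(fiber_card S3) -sum1_card.
by apply: eq_bigl => p; rewrite !inE.
Qed.

Lemma phiB_eq : phi @: Bset = [set S in D3 | 0 < eS S].
Proof.
apply/setP => S; apply/imsetP/idP => [[p pB ->]|].
  rewrite inE phi_D3 //= -fiber_card ?phi_D3 //.
  by apply/card_gt0P; exists p; rewrite inE pB eqxx.
rewrite inE => /andP [S3]; rewrite -fiber_card // => /card_gt0P [p].
by rewrite inE => /andP [pB /eqP <-]; exists p.
Qed.

Lemma card_phiB : #|phi @: Bset| = \sum_(S in D3) (0 < eS S).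
Proof. by rewrite phiB_eq card_setI_sum. Qed.

Variables (Y : finType) (kap : 'I_q * 'I_m -> Y).
Hypothesis kapE : forall p p', kap p = kap p' <-> (forall i, cnt p i = cnt p' i).

Lemma card_kap : #|kap @: setT| = #|Aset| + #|phi @: Bset|.
Proof.
rewrite -(setUCr Aset) imsetU cardsU.
have -> : (kap @: Aset) :&: (kap @: (~: Aset)) = set0.
  apply/setP => y; rewrite !inE; apply/negP => /andP [/imsetP [p pA ->] /imsetP [p' pB]].
  move/kapE => h; have [i /eqP] := AB_disj pA pB; exact.
rewrite cards0 subn0 card_in_imset; last first.
  by move=> p p' pA p'A /kapE; apply: cnt_injA.
congr addn; apply: card_imset_equiv => p p' pB p'B.
apply/eqP/eqP => [/kapE|]; first by move/(cnt_eqB pB p'B).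
by move/(cnt_eqB pB p'B) => h; apply/kapE.
Qed.

Theorem comb_main :
  q * m + #|[set S in D3 | tS S]| = #|kap @: setT| + \sum_a 'C(#|Nb a|, 2).
Proof.
have hAB : #|Aset| + #|Bset| = q * m by rewrite cardsC card_prod !card_ord.
rewrite card_kap card_phiB sum_C2 tri_sum -hAB cardB -addnA -big_split /=.
rewrite -addnA -big_split /=; congr addn; apply: eq_bigr => S S3.
by rewrite pointwise // addnC.
Qed.
End Comb.

Section Tree.
Variables (V : finType) (e : rel V).
Hypothesis eC : ssrbool.symmetric e.
Hypothesis eI : irreflexive e.
Local Notation E := (graph_edges e).

Lemma inE_E t : (t \in E) = [exists x, exists y, e x y && (t == [set x; y])].
Proof. by rewrite inE. Qed.

Lemma edgeP s : reflect (exists x y, e x y /\ s = [set x; y]) (s \in E).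
Proof.
rewrite inE; apply: (iffP existsP) => [[x /existsP [y /andP [exy /eqP ->]]]|[x [y [exy ->]]]].
  by exists x, y.
by exists x; apply/existsP; exists y; rewrite exy eqxx.
Qed.

Lemma edge_two s x y : s \in E -> x \in s -> y \in s -> x != y -> s = [set x; y] /\ e x y.
Proof.
case/edgeP => a [b [eab ->]]; rewrite !inE.
have ab : a != b by apply/eqP => h; rewrite h eI in eab.
case/orP => /eqP ->; case/orP => /eqP ->; rewrite ?eqxx //= => _.
by split; [apply/setP => z; rewrite !inE orbC | rewrite eC].
Qed.

Lemma edge_card s : s \in E -> #|s| = 2.
Proof.
case/edgeP => a [b [eab ->]]; rewrite cards2.
by case: (a =P b) => // h; rewrite h eI in eab.
Qed.

Lemma star_card x : #|[set s in E | x \in s]| = vdeg e x.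
Proof.
rewrite /vdeg -(@card_in_imset _ _ (fun y => [set x; y])); last first.
  move=> y1 y2; rewrite !inE => e1 e2 h.
  have : y1 \in [set x; y2] by rewrite -h !inE eqxx orbT.
  rewrite !inE => /orP [/eqP h1|/eqP //]; by rewrite -h1 eI in e1.
apply: eq_card => s; apply/idP/imsetP.
  rewrite inE => /andP [sE xs].
  have : 1 < #|s| by rewrite edge_card.
  case/card_gt1P => a [b [aS bS ab]].
  have [y [yx ys]] : exists y, y != x /\ y \in s.
    case: (a =P x) => [ax|ax]; last by exists a; split => //; apply/eqP.
    by exists b; split => //; rewrite -ax eq_sym.
  have xy : x != y by rewrite eq_sym.
  have [-> exy] := edge_two sE xs ys xy.
  by exists y; rewrite // inE.
move=> [y]; rewrite inE => exy ->; rewrite !inE eqxx andbT.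
by apply/existsP; exists x; apply/existsP; exists y; rewrite exy eqxx.
Qed.

Local Notation m := (nedges e).

Lemma edge_of_in (i : 'I_m) : edge_of i \in E.
Proof. exact: enum_valP. Qed.

Lemma edge_of_inj : injective (@edge_of V e).
Proof. exact: enum_val_inj. Qed.

Lemma edge_of_surj s : s \in E -> exists i : 'I_m, edge_of i = s.
Proof. by move=> sE; exists (enum_rank_in sE s); rewrite /edge_of enum_rankK_in. Qed.

Lemma meet2 (t : {set V}) x y : (t :&: [set x; y] != set0) = (x \in t) || (y \in t).
Proof.
apply/set0Pn/orP => [[z]|[h|h]].
  by rewrite !inE => /andP [zt /orP [/eqP <-|/eqP <-]]; [left|right].
  by exists x; rewrite !inE h eqxx.
by exists y; rewrite !inE h eqxx orbT.
Qed.

Lemma ldeg (i : 'I_m) :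
  #|[set j | line_adj i j]| = (\sum_(x in edge_of i) vdeg e x) - 2.
Proof.
set s := edge_of i; have sE : s \in E := edge_of_in i.
rewrite -(card_imset _ edge_of_inj).
have -> : (@edge_of V e) @: [set j | line_adj i j] =
          [set t in E | (t != s) && (t :&: s != set0)].
  apply/setP => t; apply/imsetP/idP => [[j]|].
    rewrite !in_set /line_adj => /andP [ij ne] ->.
    apply/andP; split. have := edge_of_in j. rewrite inE. by [].
    rewrite setIC ne andbT.
    by apply: contra ij => /eqP /edge_of_inj ->.
  rewrite in_set => /andP [tE /andP [ts ne]]; have [j ej] := edge_of_surj tE.
  exists j => //; rewrite in_set /line_adj ej setIC ne andbT.
  by apply: contra ts => /eqP ij; rewrite -ej -ij.
have [x [y [exy es]]] := edgeP _ sE.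
have xy : x != y by apply/eqP => h; rewrite h eI in exy.
have -> : [set t in E | (t != s) && (t :&: s != set0)] =
   ([set t in E | x \in t] :\ s) :|: ([set t in E | y \in t] :\ s).
  apply/setP => t; rewrite in_setU !in_setD1 !in_set es meet2.
  by case: (t == [set x; y]); case: (x \in t); case: (y \in t); rewrite ?andbT ?andbF ?orbF ?orbb.
rewrite cardsU.
have -> : (([set t in E | x \in t] :\ s) :&: ([set t in E | y \in t] :\ s)) = set0.
  apply/setP => t; rewrite !inE; apply/negP => /andP [/and3P [ts tE xt] /and3P [_ _ yt]].
  by rewrite -inE_E in tE; have [h _] := edge_two tE xt yt xy; move: ts; rewrite es h eqxx.
have hx := cardsD1 s [set t in E | x \in t].
have hy := cardsD1 s [set t in E | y \in t].
have sx : s \in [set t in E | x \in t] by rewrite in_set sE es !inE eqxx.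
have sy : s \in [set t in E | y \in t] by rewrite in_set sE es !inE eqxx orbT.
rewrite sx sy !star_card in hx hy.
rewrite cards0 subn0 es big_setU1 ?inE //= big_set1. move: hx hy; rewrite es /= => hx hy; rewrite hx hy addnACA addKn. done.
Qed.

Definition Iv v : {set 'I_m} := [set j | v \in edge_of j].

Lemma card_Iv v : #|Iv v| = vdeg e v.
Proof.
rewrite -star_card -(card_imset _ edge_of_inj); apply: eq_card => t.
apply/imsetP/idP => [[j]|].
  by rewrite in_set => vj ->; rewrite in_set vj andbT edge_of_in.
rewrite in_set => /andP [tE vt]; have [j ej] := edge_of_surj tE.
by exists j; rewrite // in_set ej.
Qed.

Definition tT (S : {set 'I_m}) : bool :=
  [forall u in S, forall w in S, (u != w) ==> line_adj u w].

Lemma common_uniq (S : {set 'I_m}) v w : 1 < #|S| ->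
  S \subset Iv v -> S \subset Iv w -> v = w.
Proof.
case/card_gt1P => i [j [iS jS ij]] /subsetP hv /subsetP hw.
apply/eqP; apply/negP => /negP vw.
have := hv i iS; have := hw i iS; have := hv j jS; have := hw j jS.
rewrite !in_set => wj vj wi vi.
have [h1 _] := edge_two (edge_of_in i) vi wi vw.
have [h2 _] := edge_two (edge_of_in j) vj wj vw.
by move: ij; rewrite (edge_of_inj (etrans h1 (esym h2))) eqxx.
Qed.

Lemma common_tT (S : {set 'I_m}) v : S \subset Iv v -> tT S.
Proof.
move/subsetP => h; apply/forall_inP => u uS; apply/forall_inP => w wS.
apply/implyP => uw; rewrite /line_adj uw /=; apply/set0Pn; exists v.
by have := h u uS; have := h w wS; rewrite !in_set => -> ->.
Qed.

Hypothesis acyc : graph_acyclic e.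

Lemma common_exists (S : {set 'I_m}) : #|S| = 3 -> tT S -> exists v, S \subset Iv v.
Proof.
case: cards_eqP => s us; case: s us => [|i [|j [|k [|]]]] //= us _.
move: us; rewrite !inE !negb_or => /and3P [/andP [ij ik] jk _].
move/forall_inP => h.
have adj u w : u \in [:: i; j; k] -> w \in [:: i; j; k] -> u != w ->
    edge_of u :&: edge_of w != set0.
  move=> us ws uw; have /forall_inP := h u ltac:(by rewrite in_set).
  by move/(_ w ltac:(by rewrite in_set)); rewrite uw /= /line_adj uw.
have [x] := set0Pn _ (adj i j ltac:(by rewrite !inE eqxx) ltac:(by rewrite !inE eqxx orbT) ij).
rewrite in_setI => /andP [xi xj].
case xk : (x \in edge_of k).
  exists x; apply/subsetP => u; rewrite !inE => /or3P [] /eqP ->; by rewrite ?xk.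
have [y] := set0Pn _ (adj i k ltac:(by rewrite !inE eqxx) ltac:(by rewrite !inE eqxx !orbT) ik).
rewrite in_setI => /andP [yi yk].
have [z] := set0Pn _ (adj j k ltac:(by rewrite !inE eqxx orbT) ltac:(by rewrite !inE eqxx !orbT) jk).
rewrite in_setI => /andP [zj zk].
have xy : x != y by apply: contraFneq xk => ->.
have xz : x != z by apply: contraFneq xk => ->.
have [hi exy] := edge_two (edge_of_in i) xi yi xy.
have yz : y != z.
  apply/eqP => eyz; rewrite -eyz in zj.
  have [hj _] := edge_two (edge_of_in j) xj zj xy.
  by move: ij; rewrite (edge_of_inj (etrans hi (esym hj))) eqxx.
have [_ eyz] := edge_two (edge_of_in k) yk zk yz.
have zx : z != x by rewrite eq_sym.
have [_ ezx] := edge_two (edge_of_in j) zj xj zx.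
have := acyc (p := [:: x; y; z]).
by rewrite /= !inE !negb_or xy xz yz exy eyz ezx => /(_ isT isT).
Qed.

Lemma card_common (S : {set 'I_m}) : #|S| = 3 -> #|[set v | S \subset Iv v]| = tT S.
Proof.
move=> S3; case tS: (tT S).
  have [v0 h0] := common_exists S3 tS.
  apply/eqP/cards1P; exists v0; apply/setP => v; rewrite !inE.
  apply/idP/eqP => [h|->//]; apply: (common_uniq _ h h0); by rewrite S3.
apply/eqP; rewrite cards_eq0; apply/eqP/setP => v; rewrite !inE.
by apply/negP => /common_tT; rewrite tS.
Qed.

Lemma card_set_sum (T : finType) (P : pred T) : #|[set x | P x]| = \sum_x P x.
Proof.
rewrite -sum1_card big_mkcond [RHS]big_mkcond /=; apply: eq_bigr => x _.
by rewrite !inE; case: (P x).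
Qed.

Lemma tri_count :
  #|[set S : {set 'I_m} | (#|S| == 3) && tT S]| = \sum_v 'C(vdeg e v, 3).
Proof.
under [RHS]eq_bigr => v _ do rewrite -card_Iv -cards_draws card_set_sum.
rewrite exchange_big card_set_sum /=; apply: eq_bigr => S _.
rewrite -card_set_sum.
case: (#|S| =P 3) => [S3|nS].
  have -> : [set x | S \subset Iv x & true] = [set v | S \subset Iv v] by apply/setP => v; rewrite !inE andbT.
  by rewrite (card_common S3).
rewrite /=; apply/esym/eqP; rewrite cards_eq0; apply/eqP/setP => v.
by rewrite !inE andbF.
Qed.
End Tree.

Section LinAlg.
Import GRing.Theory.
Local Open Scope ring_scope.
Variables (V : finType) (e : rel V) (K : fieldType).
Local Notation m := (nedges e).
Local Notation q := (ngens e).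
Definition prg (k : 'I_q) : 'I_m * 'I_m := @enum_val _ (mem (line_gens e)) k.
Definition mu (p : 'I_q * 'I_m) : 'X_{1..m} :=
  (U_(p.2) + (U_((prg p.1).1) + U_((prg p.1).2)))%MM.

Lemma coefE (c : 'M[K]_(q, m)) M :
  (syz_image c)@_M = \sum_(k < q) \sum_(f < m) c k f * (mu (k, f) == M)%:R.
Proof.
rewrite /syz_image raddf_sum; apply: eq_bigr => k _.
rewrite mulr_suml raddf_sum; apply: eq_bigr => f _.
rewrite -scalerAl; rewrite [LHS]linearZ /= /gen_mon /mu /= -!mpolyXD mcoeffX.
done.
Qed.

Lemma syz_coords_lin : linear (@syz_coords V e K).
Proof.
move=> a c d; apply/rowP => j; rewrite !mxE !coefE mulr_sumr -big_split.
apply: eq_bigr => k _ /=; rewrite mulr_sumr -big_split; apply: eq_bigr => f _ /=.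
by rewrite !mxE mulrDl mulrA.
Qed.

HB.instance Definition _ := GRing.isLinear.Build K _ _ _ (@syz_coords V e K) syz_coords_lin.

Lemma linfunE (c : 'M[K]_(q, m)) : linfun (@syz_coords V e K) c = syz_coords c.
Proof. by rewrite lfunE. Qed.

Local Notation N := #|{: 'X_{1..m < 4}}|.
Definition ej (j : 'I_N) : 'X_{1..m} := bmnm (@enum_val _ (mem {: 'X_{1..m < 4}}) j).
Definition Jset : {set 'I_N} := [set j | [exists p, mu p == ej j]].

Lemma ej_inj : injective ej.
Proof. by move=> i j /val_inj /enum_val_inj. Qed.

Lemma coordE (c : 'M[K]_(q, m)) j : syz_coords c 0 j =
  \sum_(k < q) \sum_(f < m) c k f * (mu (k, f) == ej j)%:R.
Proof. by rewrite mxE coefE. Qed.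

Lemma coord0 (c : 'M[K]_(q, m)) j : j \notin Jset -> syz_coords c 0 j = 0.
Proof.
move=> nJ; rewrite coordE big1 // => k _; rewrite big1 // => f _.
case: eqP => [h|]; last by rewrite mulr0.
by move: nJ; rewrite inE; case/existsP; exists (k, f); rewrite h.
Qed.

Lemma coord_delta k f j : mu (k, f) = ej j ->
  syz_coords (delta_mx k f) = delta_mx 0 j :> 'rV[K]_N.
Proof.
move=> hp; apply/rowP => j'; rewrite coordE [RHS]mxE eqxx /=.
rewrite (bigD1 k) //= [X in _ + X]big1 ?addr0 => [|k' nk]; last first.
  by rewrite big1 // => f' _; rewrite mxE (negbTE nk) mul0r.
rewrite (bigD1 f) //= [X in _ + X]big1 ?addr0 => [|f' nf]; last first.
  by rewrite mxE eqxx (negbTE nf) mul0r.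
rewrite mxE !eqxx mul1r hp; congr (_%:R).
case: (j' =P j) => [->|nj]; first by rewrite eqxx.
by case: eqP => // /ej_inj h; case: nj.
Qed.

Lemma limg_eq : limg (linfun (@syz_coords V e K)) = <<[seq delta_mx ord0 j | j <- enum Jset]>>%VS.
Proof.
apply/subv_anti/andP; split.
  apply/subvP => w /memv_imgP [c _ ->]; rewrite linfunE.
  rewrite (row_sum_delta (syz_coords c)) (bigID (mem Jset)) /= [X in _ + X]big1 ?addr0.
    apply: memv_suml => j Jj; apply: memvZ; apply: memv_span.
    by apply: map_f; rewrite mem_enum.
  by move=> j nJ; rewrite coord0 ?scale0r.
apply/span_subvP => w /mapP [j]; rewrite mem_enum inE => /existsP [[k f] /eqP hp] ->.
have -> : delta_mx ord0 j = syz_coords (delta_mx k f : 'M[K]_(q, m)) by rewrite (coord_delta hp).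
by rewrite -linfunE; apply: memv_img; apply: memvf.
Qed.

Lemma dim_span_J : \dim <<[seq delta_mx ord0 j | j <- enum Jset] : seq 'rV[K]_N>>%VS = #|Jset| :> nat.
Proof.
set X := [seq _ | j <- enum Jset].
set Y := [seq delta_mx ord0 j | j <- enum (~: Jset)] : seq 'rV[K]_N.
have hX : (\dim <<X>> <= #|Jset|)%N by rewrite (leq_trans (dim_span _)) // size_map cardE.
have hY : (\dim <<Y>> <= #|~: Jset|)%N by rewrite (leq_trans (dim_span _)) // size_map cardE.
have hC := cardsC Jset; rewrite card_ord in hC.
have hF : (\dim (fullv : {vspace 'rV[K]_N}) <= \dim (<<X>> + <<Y>>)%VS)%N.
  apply: dimvS; apply/subvP => v _.
  rewrite (row_sum_delta v) (bigID (mem Jset)) /=; apply: memv_add.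
    apply: memv_suml => j Jj; apply: memvZ; apply: memv_span.
    by apply: map_f; rewrite mem_enum.
  apply: memv_suml => j Jj; apply: memvZ; apply: memv_span.
  by apply: map_f; rewrite mem_enum inE.
have hD := dimv_add_leqif <<X>>%VS <<Y>>%VS.
move: hF; rewrite dimvf. have hd := @dim_matrix K 1 N. rewrite hd => hF.
move: hD => [hD _]; rewrite mul1r in hF; lia.
Qed.

Lemma beta_eq : (beta23_line e K + #|Jset| = q * m)%N.
Proof.
have := limg_ker_dim (linfun (@syz_coords V e K)) fullv.
rewrite capfv limg_eq dim_span_J dimvf (@dim_matrix K q m).
by rewrite /beta23_line /syz3.
Qed.

Lemma mdeg_mu p : (mdeg (mu p) < 4)%N.
Proof. by rewrite /mu !mdegD !mdeg1. Qed.

Definition mub p : 'X_{1..m < 4} := BMultinom (mdeg_mu p).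

Lemma card_J : #|Jset| = #|mub @: setT|.
Proof.
rewrite -(card_imset _ (@enum_val_inj _ (mem {: 'X_{1..m < 4}}))).
apply: eq_card => y; apply/imsetP/imsetP => [[j]|[p _ ->]].
  rewrite inE => /existsP [p /eqP hp] ->; exists p => //.
  by apply: val_inj; rewrite /= hp.
exists (enum_rank (mub p)); last by rewrite enum_rankK.
by rewrite inE; apply/existsP; exists p; rewrite /ej enum_rankK.
Qed.

Lemma mu_cnt p i : mu p i = cnt prg p i.
Proof. by rewrite /mu /cnt !mnmDE !mnm1E. Qed.

Lemma kapE p p' : mub p = mub p' <-> (forall i, cnt prg p i = cnt prg p' i).
Proof.
split => [h i|h]; first by rewrite -!mu_cnt; have -> : mu p = mu p' by rewrite -[mu p]/(bmnm (mub p)) h.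
by apply: val_inj; apply/mnmP => i; rewrite /= !mu_cnt h.
Qed.
End LinAlg.

Section Final.
Variables (V : finType) (e : rel V).

Lemma ladjC : ssrbool.symmetric (@line_adj V e).
Proof. by move=> i j; rewrite /line_adj eq_sym setIC. Qed.

Lemma ladjI : irreflexive (@line_adj V e).
Proof. by move=> i; rewrite /line_adj eqxx. Qed.

Lemma prg_in (k : 'I_(ngens e)) : prg k \in line_gens e.
Proof. exact: enum_valP. Qed.

Lemma prg_lt (k : 'I_(ngens e)) : ((prg k).1 < (prg k).2)%N.
Proof. by have := prg_in k; rewrite inE => /andP []. Qed.

Lemma prg_adj (k : 'I_(ngens e)) : line_adj (prg k).1 (prg k).2.
Proof. by have := prg_in k; rewrite inE => /andP []. Qed.

Lemma prg_inj : injective (@prg V e).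
Proof. exact: enum_val_inj. Qed.

Lemma prg_surj (a b : 'I_(nedges e)) : (a < b)%N -> line_adj a b -> exists k, prg k = (a, b).
Proof.
move=> ab hab; have h : (a, b) \in line_gens e by rewrite inE /= ab hab.
by exists (enum_rank_in h (a, b)); rewrite /prg enum_rankK_in.
Qed.
End Final.

Theorem proposition2p17 (K : fieldType) (V : finType) (e : rel V) :
  is_tree e ->
  ((@beta23_line V e K)%:Z =
     (\sum_(s in graph_edges e) 'C(\sum_(x in s) vdeg e x - 2, 2))%:Z
     - (\sum_(x : V) 'C(vdeg e x, 3))%:Z)%R.
Proof.
move=> [[eC eI] [_ [_ acyc]]].
have hc := comb_main (@ladjC V e) (@ladjI V e) (@prg_inj V e) (@prg_lt V e)
  (@prg_adj V e) (@prg_surj V e) (@kapE V e).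
have hb := beta_eq e K; rewrite card_J in hb.
have ht := tri_count eC eI acyc.
have hS : \sum_a 'C(#|Nb (@line_adj V e) a|, 2) =
    \sum_(s in graph_edges e) 'C(\sum_(x in s) vdeg e x - 2, 2).
  rewrite (big_enum_val (fun s : {set V} => 'C(\sum_(x in s) vdeg e x - 2, 2))) /=.
  by apply: eq_bigr => a _; rewrite /Nb ldeg.
have htri : #|[set S in D3 (nedges e) | tS (@line_adj V e) S]| =
            #|[set S : {set 'I_(nedges e)} | (#|S| == 3) && tT S]|.
  by apply: eq_card => S; rewrite !inE.
rewrite htri ht hS in hc.
have hf : (beta23_line e K + \sum_(x : V) 'C(vdeg e x, 3) =
           \sum_(s in graph_edges e) 'C(\sum_(x in s) vdeg e x - 2, 2))%N.
  move: hb hc; set X := #|_|; set Q := (ngens e * nedges e)%N.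
  move=> hb hc; rewrite -hb in hc. lia.
by rewrite -hf PoszD GRing.addrK.
Qed.
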